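(* Let $0\le j\le\nu$, let integers $d\ge c\ge0$, and let $u\in\mathcal{O}_L[\epsilon_j]^\times$. Choose $F(X)\in X^n\cdot\mathcal{O}_K[[X]]$ with $F(\pi_L)=\pi_K$. Then the following are equivalent: (1) $F(\pi_L+u\pi_L^{c+1}\epsilon_j)\equiv\pi_K\pmod{\pi_L^{n+d}}$ in $\mathcal{O}_L[\epsilon_j]$; (2) there exists an $A_d$-algebra homomorphism $s_d:B_d\to B_d[\epsilon_j]$ with $s_d(\pi_L)=\pi_L+u\pi_L^{c+1}\epsilon_j$; (3) there exists an $A_d$-algebra homomorphism $s_d:B_d\to B_d[\epsilon_j]$ such that $s_d(b)-b\in\pi_L^{c+1}\epsilon_j B_d[\epsilon_j]$ for all $b\in B_d$, but it is not the case that $s_d(b)-b\in\pi_L^{c+1}\epsilon_j(\pi_L,\epsilon_j) B_d[\epsilon_j]$ for all $b\in B_d$.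
   Context: Let $p$ be a prime and $K$ a field complete with respect to a discrete valuation whose residue field is perfect of characteristic $p$. Fix a separable closure $K^{sep}$. $L/K$ is a finite totally ramified subextension of $K^{sep}/K$ of degree $n>1$, $\nu=v_p(n)$ ($v_p$ the $p$-adic valuation on $\mathbb{Z}$). $\mathcal{O}_K,\mathcal{O}_L$ are the valuation rings, $\mathcal{M}_L$ the maximal ideal of $\mathcal{O}_L$, $\pi_K,\pi_L$ uniformizers. For $d\ge0$ let $B_d=\mathcal{O}_L/\mathcal{M}_L^{n+d}$ and let $A_d=(\mathcal{O}_K+\mathcal{M}_L^{n+d})/\mathcal{M}_L^{n+d}$ be the image of $\mathcal{O}_K$ in $B_d$. For a ring $B$ and $0\le j\le\nu$, $B[\epsilon_j]=B[\epsilon]/(\epsilon^{p^{j+1}})$, where $\epsilon_j$ is the image of $\epsilon$ (so $\epsilon_j^{p^{j+1}}=0$); images of elements of $\mathcal{O}_L[\epsilon_j]$ in $B_d[\epsilon_j]$ are used implicitly. *)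

(* Defs.v *)
From HB Require Import structures.
From mathcomp Require Import all_boot all_order all_algebra.
From mathcomp Require Import vector falgebra fieldext separable.
Set Implicit Arguments. Unset Strict Implicit. Unset Printing Implicit Defensive.
Import Order.TTheory GRing.Theory Num.Theory.
Local Open Scope ring_scope.

(* A (normalized, Z-valued) valuation on a field: [v x] is only meaningful
   for [x != 0]; the value 0 is treated as having valuation +oo. *)
Definition is_valuation (F : fieldType) (v : F -> int) : Prop :=
  (forall x y, x != 0 -> y != 0 -> v (x * y) = v x + v y) /\
  (forall x y, x != 0 -> y != 0 -> x + y != 0 ->
     Num.min (v x) (v y) <= v (x + y)).

(* [vge v m x] : x lies in M^m, i.e. x = 0 or v x >= m.  [vge v 0] is the
   valuation ring. *)
Definition vge (F : fieldType) (v : F -> int) (m : int) (x : F) : Prop :=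
  x = 0 \/ m <= v x.

(* polynomials (in the variable epsilon) with coefficients in the valuation ring *)
Definition polyO (F : fieldType) (v : F -> int) (q : {poly F}) : Prop :=
  forall i, vge v 0 q`_i.

Section Setting.
Variables (K : fieldType) (L : fieldExtType K) (v : L -> int).

Definition K_complete : Prop :=
  forall a : nat -> K,
    (forall m : int, exists N, forall i k, (N <= i)%N -> (N <= k)%N ->
        vge v m ((a i - a k)%:A)) ->
    exists l : K, forall m : int, exists N, forall i, (N <= i)%N ->
        vge v m ((a i - l)%:A).

Definition residue_char (p : nat) : Prop := vge v 1 ((p%:R : K)%:A).
Definition residue_perfect (p : nat) : Prop :=
  forall a : K, vge v 0 a%:A ->
    exists b : K, vge v 0 b%:A /\ vge v 1 ((a - b ^+ p)%:A).

(* L/K totally ramified of degree n = [L:K] w.r.t. the normalized valuation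
   v of L (v(L^x) = Z): v(K^x) is contained in nZ; together with
   v(pi_K) = n this gives v(K^x) = nZ, i.e. e(L/K) = n. *)
Definition totally_ramified : Prop :=
  forall a : K, a != 0 -> ((\dim {:L})%:Z %| v a%:A)%Z.

Variables (piL : L) (N P : nat).

Definition inJ (q : {poly L}) : Prop :=
  exists z w, polyO v z /\ polyO v w /\
    q = (piL ^+ N)%:P * z + 'X^P * w.

(* congruence in B[eps_j] = O_L[eps]/(pi_L^N, eps^P) *)
Definition congJ (q1 q2 : {poly L}) : Prop := inJ (q1 - q2).

(* An A_d-algebra homomorphism B_d -> B_d[eps_j], B_d = O_L/pi_L^N,
   B_d[eps_j] = O_L[eps]/(pi_L^N, eps^P), given through a lift
   s : O_L -> O_L[eps] (values outside O_L are irrelevant). *)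
Definition Ad_alg_hom (s : L -> {poly L}) : Prop :=
  [/\ forall x, vge v 0 x -> polyO v (s x),
      forall x y, vge v 0 x -> vge v 0 y -> vge v N%:Z (x - y) ->
        congJ (s x) (s y),
      forall x y, vge v 0 x -> vge v 0 y -> congJ (s (x + y)) (s x + s y),
      forall x y, vge v 0 x -> vge v 0 y -> congJ (s (x * y)) (s x * s y) &
      forall a : K, vge v 0 a%:A -> congJ (s a%:A) (a%:A)%:P].

End Setting.

(* Main.v *)
Require Import Defs.
From HB Require Import structures.
From mathcomp Require Import all_boot all_order all_algebra.
From mathcomp Require Import vector falgebra fieldext separable.
From Stdlib Require ClassicalEpsilon Classical_Prop.
From mathcomp Require Import zify ring lra.
Import Order.TTheory GRing.Theory Num.Theory.
Local Open Scope ring_scope.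

Module Aux.
Set Implicit Arguments. Unset Strict Implicit. Unset Printing Implicit Defensive.

Definition bP (P : Prop) : bool :=
  if ClassicalEpsilon.excluded_middle_informative P then true else false.
Lemma bPE (P : Prop) : bP P <-> P.
Proof. by rewrite /bP; case: ClassicalEpsilon.excluded_middle_informative. Qed.

Section Val.
Variables (F : fieldType) (v : F -> int).
Hypothesis hv : is_valuation v.

Lemma vM x y : x != 0 -> y != 0 -> v (x * y) = v x + v y.
Proof. by case: hv => h _; apply: h. Qed.
Lemma vD x y : x != 0 -> y != 0 -> x + y != 0 -> Num.min (v x) (v y) <= v (x + y).
Proof. by case: hv => _ h; apply: h. Qed.
Lemma v1 : v 1 = 0.
Proof.
have := vM (oner_neq0 F) (oner_neq0 F); rewrite mulr1 => h.
by apply: (addrI (v 1)); rewrite addr0 -h.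
Qed.
Lemma vN1 : v (-1) = 0.
Proof.
have h1 : (-1 : F) != 0 by rewrite oppr_eq0 oner_neq0.
have := vM h1 h1; rewrite mulrNN mulr1 v1 => h; lia.
Qed.
Lemma vN x : v (- x) = v x.
Proof.
case: (eqVneq x 0) => [->|x0]; first by rewrite oppr0.
have h1 : (-1 : F) != 0 by rewrite oppr_eq0 oner_neq0.
by rewrite -mulN1r vM // vN1 add0r.
Qed.
Lemma vV x : x != 0 -> v x^-1 = - v x.
Proof.
move=> x0; have := vM x0 (invr_neq0 x0); rewrite mulfV // v1 => h; lia.
Qed.
Lemma vX x k : x != 0 -> v (x ^+ k) = (k%:Z * v x)%R.
Proof.
move=> x0; elim: k => [|k IH]; first by rewrite expr0 v1 mul0r.
by rewrite exprS vM ?expf_neq0 // IH intS mulrDl mul1r.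
Qed.
Lemma v_strict x y : x != 0 -> y != 0 -> v x < v y -> x + y != 0 /\ v (x + y) = v x.
Proof.
move=> x0 y0 lt.
have xy0 : x + y != 0.
  by apply/negP; rewrite addr_eq0 => /eqP exy; move: lt; rewrite exy vN ltxx.
split => //; apply/eqP; rewrite eq_le; apply/andP; split; last first.
  have := vD x0 y0 xy0; rewrite min_l //; exact: ltW.
have ny0 : - y != 0 by rewrite oppr_eq0.
have := vD xy0 ny0; rewrite addrK => /(_ x0); rewrite vN ge_min.
by case/orP => // h; move: lt; rewrite ltNge h.
Qed.

Lemma vge0 m : vge v m 0. Proof. by left. Qed.
Lemma vgeD m x y : vge v m x -> vge v m y -> vge v m (x + y).
Proof.
move=> hx0 hy0; case: hx0 => [->|hx]; first by rewrite add0r.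
case: hy0 => [->|hy]; first by rewrite addr0; right.
case: (eqVneq (x + y) 0) => [->|xy0]; first by left.
right; case: (eqVneq x 0) => [x0|x0]; first by rewrite x0 add0r.
case: (eqVneq y 0) => [y0|y0]; first by rewrite y0 addr0.
by apply: le_trans (vD x0 y0 xy0); rewrite le_min hx hy.
Qed.
Lemma vgeN m x : vge v m x -> vge v m (- x).
Proof. by case=> [->|h]; [left; rewrite oppr0|right; rewrite vN]. Qed.
Lemma vgeB m x y : vge v m x -> vge v m y -> vge v m (x - y).
Proof. by move=> hx hy; apply: vgeD hx (vgeN hy). Qed.
Lemma vge_sum m (I : Type) (r : seq I) (P : pred I) (G : I -> F) :
  (forall i, P i -> vge v m (G i)) -> vge v m (\sum_(i <- r | P i) G i).
Proof. by move=> h; apply: (big_ind (vge v m)) => //; [apply: vge0|apply: vgeD]. Qed.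
Lemma vgeM a b x y : vge v a x -> vge v b y -> vge v (a + b) (x * y).
Proof.
case=> [->|hx]; first by left; rewrite mul0r.
case=> [->|hy]; first by left; rewrite mulr0.
case: (eqVneq x 0) => [->|x0]; first by left; rewrite mul0r.
case: (eqVneq y 0) => [->|y0]; first by left; rewrite mulr0.
by right; rewrite vM //; lia.
Qed.
Lemma vge_le m m' x : m' <= m -> vge v m x -> vge v m' x.
Proof. by move=> le [->|h]; [left|right; lia]. Qed.
Lemma vgeM0l m x y : vge v 0 x -> vge v m y -> vge v m (x * y).
Proof. by move=> hx hy; have := vgeM hx hy; rewrite add0r. Qed.
Lemma vgeM0r m x y : vge v m x -> vge v 0 y -> vge v m (x * y).
Proof. by move=> hx hy; have := vgeM hx hy; rewrite addr0. Qed.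
Lemma vge1 : vge v 0 1. Proof. by right; rewrite v1. Qed.
Lemma vgeX m x k : vge v m x -> vge v (k%:Z * m) (x ^+ k).
Proof.
move=> h; elim: k => [|k IH]; first by rewrite expr0 mul0r; apply vge1.
by rewrite exprS intS mulrDl mul1r; apply: vgeM h IH.
Qed.
Lemma vge_inf x : (forall m, vge v m x) -> x = 0.
Proof.
move=> h; case: (eqVneq x 0) => // x0; case: (h (v x + 1)) => // ?; lia.
Qed.
Lemma vge_neq0 m x : x != 0 -> vge v m x -> m <= v x.
Proof. by move=> x0 [/eqP|]; [rewrite (negbTE x0)|]. Qed.

End Val.
Arguments vM {F v} hv {x y}.
Arguments vD {F v} hv {x y}.
Arguments vgeD {F v} hv {m x y}.
Arguments vgeN {F v} hv {m x}.
Arguments vgeB {F v} hv {m x y}.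
Arguments vgeM {F v} hv {a b x y}.
Arguments vgeM0l {F v} hv {m x y}.
Arguments vgeM0r {F v} hv {m x y}.
Arguments vgeX {F v} hv {m x} k.
Arguments vge_le {F v m m' x}.
Arguments vge_sum {F v} hv {m I r P G}.
Arguments v_strict {F v} hv {x y}.
Arguments vX {F v} hv {x} k.
Arguments vV {F v} hv {x}.
Arguments vge_neq0 {F v m x}.
Arguments vge_inf {F v x}.

Section ObDef.
Variables (F : fieldType) (v : F -> int).
Definition Ob : {pred F} := fun x => bP (is_valuation v -> vge v 0 x).
Lemma ObP (hv : is_valuation v) x : reflect (vge v 0 x) (x \in Ob).
Proof.
apply: (iffP idP); rewrite /in_mem /= => h.
  by move/bPE: h; apply.
by apply/bPE.
Qed.
Fact Ob_subring : subring_closed Ob.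
Proof.
split; first by apply/bPE => hv; apply: vge1.
  by move=> x y /bPE hx /bPE hy; apply/bPE => hv; apply: vgeB (hx hv) (hy hv).
by move=> x y /bPE hx /bPE hy; apply/bPE => hv; apply: vgeM0l (hx hv) (hy hv).
Qed.
HB.instance Definition _ := GRing.isSubringClosed.Build F Ob Ob_subring.
End ObDef.

Section DV.
Variables (F : fieldType) (v : F -> int).
Hypothesis hv : is_valuation v.
Variable t : nat -> F.

Definition distinctv k := forall i j, (i < k)%N -> (j < k)%N -> i <> j ->
  t i != 0 -> t j != 0 -> v (t i) != v (t j).

Lemma dv_claim k : distinctv k ->
  (forall i, (i < k)%N -> t i = 0) \/
  (\sum_(i < k) t i != 0 /\ exists i, [/\ (i < k)%N, t i != 0,
     v (\sum_(i < k) t i) = v (t i) & forall l, (l < k)%N -> vge v (v (t i)) (t l)]).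
Proof.
elim: k => [|k IH] hd; first by left.
have hd' : distinctv k.
  by move=> i j hi hj; apply: hd; apply: ltnW.
rewrite big_ord_recr /=.
case: (eqVneq (t k) 0) => [tk0|tk0].
  rewrite tk0 addr0; case: (IH hd') => [h|[s0 [i [hi ti0 hvs hl]]]].
    by left => i hi; rewrite ltnS leq_eqVlt in hi; case/orP: hi => [/eqP->|]; [|apply: h].
  right; split => //; exists i; split => //; first by apply: ltnW.
  by move=> l; rewrite ltnS leq_eqVlt => /orP [/eqP->|]; [rewrite tk0; apply: vge0|apply: hl].
case: (IH hd') => [h|[s0 [i [hi ti0 hvs hl]]]].
  have -> : \sum_(i < k) t i = 0 by rewrite big1 // => i _; apply: h.
  rewrite add0r; right; split => //; exists k; split => //.
  move=> l; rewrite ltnS leq_eqVlt => /orP [/eqP->|hlk]; first by right.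
  by rewrite (h l hlk); apply: vge0.
have hne : v (t i) != v (t k) by apply: hd => //; [apply: ltnW| move=> eik; move: hi; rewrite eik ltnn].
case: (ltgtP (v (t i)) (v (t k))) => [lt|gt|eq]; last by rewrite eq eqxx in hne.
- have lt' : v (\sum_(i < k) t i) < v (t k) by rewrite hvs.
  have [h1 h2] := v_strict hv s0 tk0 lt'.
  right; split => //; exists i; split => //; first by apply: ltnW.
  by rewrite h2.
  move=> l; rewrite ltnS leq_eqVlt => /orP [/eqP->|]; last by apply: hl.
  by right; apply: ltW.
- have gt' : v (t k) < v (\sum_(i < k) t i) by rewrite hvs.
  have [h1 h2] := v_strict hv tk0 s0 gt'.
  right; rewrite addrC; split => //; exists k; split => //.
  move=> l; rewrite ltnS leq_eqVlt => /orP [/eqP->|hlk]; first by right.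
  by apply: vge_le (hl l hlk); apply: ltW.
Qed.

Lemma dv_sum k m : distinctv k -> vge v m (\sum_(i < k) t i) ->
  forall i, (i < k)%N -> vge v m (t i).
Proof.
move=> hd hs i hi; case: (dv_claim hd) => [h|[s0 [l [hl tl0 hvs hall]]]].
  by rewrite (h i hi); apply: vge0.
apply: vge_le (hall i hi); rewrite -hvs; exact: vge_neq0 s0 hs.
Qed.

Lemma dv_sum0 k : distinctv k -> \sum_(i < k) t i = 0 ->
  forall i, (i < k)%N -> t i = 0.
Proof.
move=> hd hs i hi; apply: vge_inf => m; apply: dv_sum hd _ _ hi.
by rewrite hs; apply: vge0.
Qed.
End DV.

Lemma distinct_mod (n : nat) (A B : int) (i j : nat) :
  (i < n)%N -> (j < n)%N -> (n%:Z %| A)%Z -> (n%:Z %| B)%Z ->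
  A + i%:Z = B + j%:Z -> i = j.
Proof.
move=> hi hj /dvdzP [a ->] /dvdzP [b ->] h.
have e : (b - a) * n%:Z = i%:Z - j%:Z by rewrite mulrBl; lia.
move: e; move: (b - a) => c. case: (ltrgtP c 0) => [c0|c0|->]; last by rewrite mul0r; lia.
  have : c * n%:Z <= - n%:Z.
    have : c <= -1 by lia.
    move=> h1; have := ler_wpM2r (le0z_nat n) h1; rewrite mulN1r; done.
  lia.
have : n%:Z <= c * n%:Z.
  have : 1 <= c by lia.
  move=> h1; have := ler_wpM2r (le0z_nat n) h1; rewrite mul1r; done.
lia.
Qed.
Arguments dv_sum {F v} hv {t k m}.
Arguments dv_sum0 {F v} hv {t k}.

Section OKdef.
Variables (K : fieldType) (L : fieldExtType K) (v : L -> int).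
Definition Kim : {pred L} := fun x => bP (exists a : K, x = a%:A).
Definition OK : {pred L} := fun x => (x \in Ob v) && (x \in Kim).
Lemma KimP x : reflect (exists a : K, x = a%:A) (x \in Kim).
Proof. by apply: (iffP idP); rewrite /in_mem /= => /bPE. Qed.
Fact OK_subring : subring_closed OK.
Proof.
have Kr : subring_closed Kim.
  split; first by apply/KimP; exists 1; rewrite scale1r.
    by move=> x y /KimP [a ->] /KimP [b ->]; apply/KimP; exists (a - b); rewrite scalerBl.
  move=> x y /KimP [a ->] /KimP [b ->]; apply/KimP; exists (a * b).
  by rewrite mulr_algl scalerA.
case: Kr => K1 KB KM.
split; first by apply/andP; split; [apply: rpred1|exact: K1].
  by move=> x y /andP [h1 h2] /andP [h3 h4]; apply/andP; split; [apply: rpredB|apply: KB].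
by move=> x y /andP [h1 h2] /andP [h3 h4]; apply/andP; split; [apply: rpredM|apply: KM].
Qed.
HB.instance Definition _ := GRing.isSubringClosed.Build L OK OK_subring.
Lemma OKP (hv : is_valuation v) x :
  reflect (vge v 0 x /\ exists a : K, x = a%:A) (x \in OK).
Proof.
apply: (iffP andP) => [[/(ObP hv) h1 /KimP h2]|[h1 h2]]; first by split.
by split; [apply/(ObP hv)|apply/KimP].
Qed.
Lemma OK_Ob x : x \in OK -> x \in Ob v.
Proof. by case/andP. Qed.

End OKdef.

Lemma dvd_neg (n : nat) (A : int) : (n%:Z %| A)%Z -> A < 0 -> A <= - n%:Z.
Proof.
move=> /dvdzP [q ->]; case: (ltrgtP q 0) => [c0|c0|->] h; last by rewrite mul0r in h.
  2: by have := ler_wpM2r (le0z_nat n) (ltW c0); rewrite mul0r => h'; lia.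
have hq : q <= -1 by lia.
by have := ler_wpM2r (le0z_nat n) hq; rewrite mulN1r.
Qed.

Lemma dvd_pos (n : nat) (A : int) : (n%:Z %| A)%Z -> 0 < A -> n%:Z <= A.
Proof.
move=> /dvdzP [q ->]; case: (ltrgtP q 0) => [c0|c0|->] h; last by rewrite mul0r in h.
  by have := ler_wpM2r (le0z_nat n) (ltW c0); rewrite mul0r => h'; lia.
have hq : 1 <= q by lia.
by have := ler_wpM2r (le0z_nat n) hq; rewrite mul1r.
Qed.


Section Main.
Variables (K : fieldType) (L : fieldExtType K) (v : L -> int).
Hypothesis hv : is_valuation v.
Variables (piL : L) (N P : nat).
Hypothesis hpiL0 : piL != 0.
Hypothesis hpiL : v piL = 1.
Hypothesis htot : totally_ramified v.
Local Notation n := (\dim {:L}).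

Local Notation O := (Ob v).
Local Notation inJ := (inJ v piL N P).
Local Notation congJ := (congJ v piL N P).

Lemma polyOP q : polyO v q <-> q \is a polyOver O.
Proof.
split => [h|/polyOverP h i]; first by apply/polyOverP => i; apply/(ObP hv).
exact/(ObP hv).
Qed.

Lemma KO_polyO r : r \is a polyOver (OK v) -> polyO v r.
Proof.
move=> /polyOverP h; apply/polyOP; apply/polyOverP => i.
exact: OK_Ob.
Qed.

Lemma v_piX k : v (piL ^+ k) = k%:Z.
Proof. by rewrite (vX hv) // hpiL mulr1. Qed.
Lemma piX_neq0 k : piL ^+ k != 0. Proof. by rewrite expf_neq0. Qed.
Lemma vge_piX k : vge v k%:Z (piL ^+ k).
Proof. by right; rewrite v_piX. Qed.

Lemma vge_div m k x : vge v (m + k%:Z) x -> vge v m (x / piL ^+ k).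
Proof.
case=> [->|h]; first by left; rewrite mul0r.
case: (eqVneq x 0) => [->|x0]; first by left; rewrite mul0r.
right; rewrite (vM hv) ?invr_neq0 ?piX_neq0 // (vV hv) ?piX_neq0 // v_piX.
by rewrite -(lerD2r k%:Z) -addrA addNr addr0.
Qed.

Lemma inJ_coef q : inJ q -> polyO v q /\ (forall i, (i < P)%N -> vge v N q`_i).
Proof.
case=> z [w [hz [hw ->]]]; split.
  move=> i; rewrite coefD coefCM coefXnM; apply: (vgeD hv).
    by apply: (vgeM0l hv _ (hz i)); apply: vge_le (vge_piX N).
  by case: ifP => _; [apply: vge0|apply: hw].
move=> i hi; rewrite coefD coefCM coefXnM hi addr0.
exact: (vgeM0r hv (vge_piX N) (hz i)).
Qed.

Lemma coef_inJ q : polyO v q -> (forall i, (i < P)%N -> vge v N q`_i) -> inJ q.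
Proof.
move=> hq hl.
exists (\poly_(i < P) (q`_i / piL ^+ N)), (drop_poly P q); split; [|split].
- move=> i; rewrite coef_poly; case: ifP => hi; last by apply: vge0.
  by apply: vge_div; rewrite add0r; apply: hl.
- by move=> i; rewrite coef_drop_poly.
- apply/polyP => i; rewrite coefD coefCM coefXnM coef_poly coef_drop_poly.
  case: ltnP => hi; first by rewrite mulrC divfK ?piX_neq0 // addr0.
  by rewrite mulr0 add0r subnK.
Qed.

Lemma inJ_polyO q : inJ q -> polyO v q. Proof. by case/inJ_coef. Qed.

Lemma inJ0 : inJ 0.
Proof. by apply: coef_inJ => [i|i _]; rewrite coef0; apply: vge0. Qed.
Lemma inJD a b : inJ a -> inJ b -> inJ (a + b).
Proof.
move=> /inJ_coef [ha1 ha2] /inJ_coef [hb1 hb2]; apply: coef_inJ.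
  by move=> i; rewrite coefD; apply: (vgeD hv).
by move=> i hi; rewrite coefD; apply: (vgeD hv); [apply: ha2|apply: hb2].
Qed.
Lemma inJN a : inJ a -> inJ (- a).
Proof.
move=> /inJ_coef [ha1 ha2]; apply: coef_inJ.
  by move=> i; rewrite coefN; apply: (vgeN hv).
by move=> i hi; rewrite coefN; apply: (vgeN hv) => //; apply: ha2.
Qed.
Lemma inJB a b : inJ a -> inJ b -> inJ (a - b).
Proof. by move=> ha hb; apply: inJD ha (inJN hb). Qed.
Lemma inJ_sum (I : Type) (r : seq I) (Pr : pred I) (G : I -> {poly L}) :
  (forall i, Pr i -> inJ (G i)) -> inJ (\sum_(i <- r | Pr i) G i).
Proof. by move=> h; apply: (big_ind inJ) => //; [apply: inJ0|apply: inJD]. Qed.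

Lemma polyOM a b : polyO v a -> polyO v b -> polyO v (a * b).
Proof. by move=> /polyOP ha /polyOP hb; apply/polyOP; apply: rpredM. Qed.

Lemma inJMr a b : inJ a -> polyO v b -> inJ (a * b).
Proof.
move=> ha hb; have [ha1 ha2] := inJ_coef ha; apply: coef_inJ.
  exact: polyOM.
move=> i hi; rewrite coefM; apply: (vge_sum hv) => // j _.
apply: (vgeM0r hv) => //; apply: ha2; apply: leq_ltn_trans hi; rewrite -ltnS; exact: ltn_ord.
Qed.
Lemma inJMl a b : polyO v a -> inJ b -> inJ (a * b).
Proof. by move=> ha hb; rewrite mulrC; apply: inJMr. Qed.

Lemma inJ_piN z : polyO v z -> inJ ((piL ^+ N)%:P * z).
Proof.
move=> hz; exists z, 0; split => //; split; first by move=> i; rewrite coef0; apply: vge0.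
by rewrite mulr0 addr0.
Qed.
Lemma inJ_XP w : polyO v w -> inJ ('X^P * w).
Proof.
move=> hw; exists 0, w; split; first by move=> i; rewrite coef0; apply: vge0.
by split => //; rewrite mulr0 add0r.
Qed.
Lemma inJ_C c : vge v N c -> inJ c%:P.
Proof.
move=> hc; apply: coef_inJ => [i|i _]; rewrite coefC; case: ifP => _; try apply: vge0.
  by apply: vge_le hc; exact: le0z_nat.
by [].
Qed.

Lemma congJ_refl a : polyO v a -> congJ a a.
Proof. by move=> _; rewrite /congJ subrr; apply: inJ0. Qed.
Lemma congJ_sym a b : congJ a b -> congJ b a.
Proof. by rewrite /congJ => h; rewrite -opprB; apply: inJN. Qed.
Lemma congJ_trans a b c : congJ a b -> congJ b c -> congJ a c.
Proof.
by rewrite /congJ => h1 h2; have := inJD h1 h2; rewrite addrA subrK.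
Qed.
Lemma congJD a b a' b' : congJ a a' -> congJ b b' -> congJ (a + b) (a' + b').
Proof.
by rewrite /congJ => h1 h2; have := inJD h1 h2; rewrite opprD addrACA.
Qed.
Lemma congJN a a' : congJ a a' -> congJ (- a) (- a').
Proof. by rewrite /congJ => h; rewrite -opprD; apply: inJN. Qed.
Lemma congJB a b a' b' : congJ a a' -> congJ b b' -> congJ (a - b) (a' - b').
Proof. by move=> h1 h2; apply: congJD h1 (congJN h2). Qed.
Lemma congJM a b a' b' : polyO v a -> polyO v b' -> congJ a a' -> congJ b b' ->
  congJ (a * b) (a' * b').
Proof.
rewrite /congJ => ha hb' h1 h2.
have -> : a * b - a' * b' = a * (b - b') + (a - a') * b' by ring.
by apply: inJD; [apply: inJMl|apply: inJMr].
Qed.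

Hypothesis hn : (0 < n)%N.

Lemma alg_neq0 (a : K) : a != 0 -> a%:A != 0 :> L.
Proof. by move=> a0; rewrite scaler_eq0 negb_or a0 oner_neq0. Qed.
Lemma alg_eq0 (a : K) : (a%:A == 0 :> L) = (a == 0).
Proof. by rewrite scaler_eq0 oner_eq0 orbF. Qed.

Lemma v_term (a : K) i : a != 0 -> v (a%:A * piL ^+ i) = v a%:A + i%:Z.
Proof.
by move=> a0; rewrite (vM hv) ?alg_neq0 ?expf_neq0 // v_piX.
Qed.

Lemma term_distinct (k : nat -> K) : distinctv v (fun i => (k i)%:A * piL ^+ i) n.
Proof.
move=> i j hi hj ij ti tj; apply/negP => /eqP e.
have ki : k i != 0 by apply: contraNneq ti => ->; rewrite scale0r mul0r.
have kj : k j != 0 by apply: contraNneq tj => ->; rewrite scale0r mul0r.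
rewrite !v_term // in e.
by apply: ij; apply: (distinct_mod hi hj (htot ki) (htot kj) e).
Qed.

Definition pows := [tuple piL ^+ i | i < n].

Definition extf m (k : 'I_m -> K) (j : nat) : K :=
  if insub j is Some o then k o else 0.

Lemma pows_free : free pows.
Proof.
apply/freeP => k hk i.
have e : \sum_(i < n) (extf k i)%:A * piL ^+ i = 0.
  rewrite -[RHS]hk; apply: eq_bigr => l _.
  by rewrite /extf valK /= /pows nth_mktuple mulr_algl.
have := dv_sum0 hv (term_distinct (k:=extf k)) e i (ltn_ord i).
move/eqP; rewrite mulf_eq0 expf_eq0 (negbTE hpiL0) andbF orbF alg_eq0.
by rewrite /extf valK => /eqP.
Qed.

Lemma pows_basis b : exists k : nat -> K, b = \sum_(i < n) (k i)%:A * piL ^+ i.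
Proof.
have hb : basis_of fullv pows.
  by rewrite basisEfree pows_free subvf size_tuple leqnn.
have : b \in <<pows>>%VS by rewrite (span_basis hb) memvf.
move/coord_span => ->; exists (extf (fun i => coord pows i b)).
apply: eq_bigr => l _.
by rewrite /extf valK /= /pows nth_mktuple mulr_algl.
Qed.

Lemma term_O (a : K) i : (i < n)%N -> vge v 0 (a%:A * piL ^+ i) -> vge v 0 a%:A.
Proof.
move=> hi; case: (eqVneq a 0) => [->|a0]; first by rewrite scale0r => _; left.
case=> [/eqP|h]; first by rewrite mulf_eq0 expf_eq0 (negbTE hpiL0) andbF orbF alg_eq0 (negbTE a0).
rewrite v_term // in h; right; case: (ltP (v a%:A) 0) => // lt.
have := dvd_neg (htot a0) lt; lia.
Qed.

Lemma expand b : vge v 0 b ->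
  exists R : {poly L}, [/\ R \is a polyOver (OK v), (size R <= n)%N & b = R.[piL]].
Proof.
move=> hb; have [k ek] := pows_basis b.
exists (\poly_(i < n) (k i)%:A); split.
- apply/polyOverP => i; rewrite coef_poly; case: ifP => hi; last by apply: rpred0.
  apply/(OKP hv); split; last by exists (k i).
  have := dv_sum hv (term_distinct (k:=k)) (m := 0); rewrite -ek => /(_ hb i hi).
  exact: term_O.
- exact: size_poly.
- by rewrite horner_poly.
Qed.

Local Notation pO := polyOP.

Lemma polyO_comp p q : polyO v p -> polyO v q -> polyO v (p \Po q).
Proof. by move=> /pO hp /pO hq; apply/pO; apply: polyOver_comp. Qed.
Lemma horner_O p x : polyO v p -> vge v 0 x -> vge v 0 p.[x].
Proof. by move=> /pO hp /(ObP hv) hx; apply/(ObP hv); apply: rpred_horner. Qed.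
Lemma polyOD p q : polyO v p -> polyO v q -> polyO v (p + q).
Proof. by move=> /pO hp /pO hq; apply/pO; apply: rpredD. Qed.
Lemma polyOB p q : polyO v p -> polyO v q -> polyO v (p - q).
Proof. by move=> /pO hp /pO hq; apply/pO; apply: rpredB. Qed.
Lemma polyOX p k : polyO v p -> polyO v (p ^+ k).
Proof. by move=> /pO hp; apply/pO; apply: rpredX. Qed.
Lemma polyOC c : vge v 0 c -> polyO v c%:P.
Proof. by move=> h; apply/pO; rewrite polyOverC; apply/(ObP hv). Qed.
Lemma polyO_X : polyO v 'X.
Proof. by apply/pO; apply: polyOverX. Qed.
Lemma polyO1 : polyO v 1.
Proof. by apply/pO; apply: rpred1. Qed.
Lemma vge_pi k : vge v 0 (piL ^+ k).
Proof. by apply: vge_le (vge_piX k). Qed.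

Lemma factor R x y : polyO v R -> polyO v x -> polyO v y ->
  exists Q, polyO v Q /\ (R \Po x) - (R \Po y) = (x - y) * Q.
Proof.
move=> hR hx hy; elim/poly_ind: R hR => [|R c IH] hR.
  by exists 0; split; [move=> i; rewrite coef0; apply: vge0|rewrite !comp_poly0 subrr mulr0].
have hR' : polyO v R.
  move=> i; have := hR i.+1; rewrite coefD coefMX coefC /=; by rewrite addr0.
have [Q [hQ eQ]] := IH hR'.
exists (Q * x + (R \Po y)); split.
  by apply: polyOD; [apply: polyOM|apply: polyO_comp].
rewrite !comp_poly_MXaddC.
have -> : (R \Po x) * x + c%:P - ((R \Po y) * y + c%:P) =
   ((R \Po x) - (R \Po y)) * x + (R \Po y) * (x - y) by ring.
by rewrite eQ; ring.
Qed.

Lemma congJ_comp R x y : polyO v R -> polyO v x -> polyO v y -> congJ x y ->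
  congJ (R \Po x) (R \Po y).
Proof.
move=> hR hx hy hxy; rewrite /Defs.congJ; have [Q [hQ ->]] := factor hR hx hy.
exact: inJMr.
Qed.

Lemma comp_Xn k (q : {poly L}) : 'X^k \Po q = q ^+ k.
Proof. by elim: k => [|k IH]; rewrite ?expr0 ?comp_polyC // !exprS comp_polyM comp_polyX IH. Qed.

Lemma inJ_compXy A y : inJ A -> polyO v y -> inJ (A \Po ('X * y)).
Proof.
move=> [z [w [hz [hw ->]]]] hy.
have hXy : polyO v ('X * y) by apply: polyOM => //; apply: polyO_X.
rewrite comp_polyD !comp_polyM comp_polyC comp_Xn exprMn -mulrA.
apply: inJD; first by apply: inJ_piN => //; apply: polyO_comp.
by apply: inJ_XP; apply: polyOM; [apply: polyOX|apply: polyO_comp].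
Qed.

Lemma Ad_poly s R : Ad_alg_hom v piL N P s -> R \is a polyOver (OK v) ->
  congJ (s R.[piL]) (R \Po s piL).
Proof.
case=> hO hcong hadd hmul hK; elim/poly_ind: R => [|R c IH] hR.
  rewrite horner0 comp_poly0.
  have := hK 0 (or_introl (scale0r _)); by rewrite scale0r.
have hRc : forall i, (R * 'X + c%:P)`_i \in OK v by apply/polyOverP.
have hR' : R \is a polyOver (OK v).
  by apply/polyOverP => i; have := hRc i.+1; rewrite coefD coefMX coefC /= addr0.
have [hc0 [a ea]] : vge v 0 c /\ exists a : K, c = a%:A.
  by apply/(OKP hv); have := hRc 0; rewrite coefD coefMX coefC /= add0r.
have hRO : polyO v R by apply: KO_polyO.
have hRp : vge v 0 R.[piL] by apply: horner_O => //; apply: vge_pi 1.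
have hpi : vge v 0 piL by have := vge_pi 1; rewrite expr1.
rewrite hornerMXaddC comp_poly_MXaddC.
apply: congJ_trans (hadd _ _ _ _) _ => //; first by apply: vgeM0l.
apply: congJD; last by rewrite ea; apply: hK; rewrite -ea.
apply: congJ_trans (hmul _ _ hRp hpi) _.
by apply: congJM; [apply: hO|apply: hO|apply: IH|apply: congJ_refl; apply: hO].
Qed.

Lemma OK_inv x : x \in OK v -> x != 0 -> v x = 0 -> x^-1 \in OK v.
Proof.
move=> /(OKP hv) [hx [a ea]] x0 vx0.
apply/(OKP hv); split.
  by right; rewrite (vV hv) // vx0.
by exists a^-1; rewrite ea -!in_algE fmorphV.
Qed.

Lemma Kim_fun R : R \is a polyOver (OK v) ->
  exists k : nat -> K, forall i, R`_i = (k i)%:A.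
Proof.
move=> /polyOverP h.
have h' : forall i, exists a : K, R`_i = a%:A by move=> i; case/(OKP hv): (h i).
exists (fun i => proj1_sig (ClassicalEpsilon.constructive_indefinite_description _ (h' i))).
by move=> i; case: ClassicalEpsilon.constructive_indefinite_description.
Qed.

Lemma KOO R : R \is a polyOver (OK v) -> polyO v R.
Proof. exact: KO_polyO. Qed.

Section KL.
Variables (E U : {poly L}) (pK : L).
Hypothesis hE : polyO v E.
Hypothesis hEk : forall k, exists w, polyO v w /\ E ^+ k = (piL ^+ k)%:P * w.
Hypothesis hpK : pK \in OK v.
Hypothesis hpKv : vge v n%:Z pK.
Hypothesis hU : U \is a polyOver (OK v).
Hypothesis hU0 : v U`_0 = 0.
Hypothesis hU0' : U`_0 != 0.
Local Notation G := (U * 'X^n - pK%:P).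
Hypothesis hGpi : vge v N G.[piL].
Hypothesis hGE : inJ (G \Po E).

Definition Z r := vge v N r.[piL] /\ inJ (r \Po E).

Lemma ZD a b : Z a -> Z b -> Z (a + b).
Proof.
by case=> h1 h2 [h3 h4]; split; [rewrite hornerD; apply: (vgeD hv)|rewrite comp_polyD; apply: inJD].
Qed.
Lemma ZN a : Z a -> Z (- a).
Proof.
by case=> h1 h2; split; [rewrite hornerN; apply: (vgeN hv)|rewrite -sub0r comp_polyB comp_poly0 sub0r; apply: inJN].
Qed.
Lemma ZB a b : Z a -> Z b -> Z (a - b).
Proof. by move=> ha hb; apply: ZD ha (ZN hb). Qed.
Lemma ZM Q r : polyO v Q -> Z r -> Z (Q * r).
Proof.
move=> hQ [h1 h2]; split.
  by rewrite hornerM; apply: (vgeM0l hv) h1; apply: horner_O => //; apply: (vge_pi 1).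
by rewrite comp_polyM; apply: inJMl => //; apply: polyO_comp.
Qed.
Lemma ZXN Q : polyO v Q -> Z ('X^N * Q).
Proof.
move=> hQ; split.
  rewrite hornerM hornerXn; apply: (vgeM0r hv); first by apply: vge_piX.
  by apply: horner_O => //; apply: (vge_pi 1).
rewrite comp_polyM comp_Xn; have [w [hw ->]] := hEk N.
by rewrite -mulrA; apply: inJ_piN; apply: polyOM => //; apply: polyO_comp.
Qed.
Lemma Zc c Q : vge v N c -> polyO v Q -> Z (c%:P * Q).
Proof.
move=> hc hQ; split.
  rewrite hornerM hornerC; apply: (vgeM0r hv) hc _.
  by apply: horner_O => //; apply: (vge_pi 1).
by rewrite comp_polyM comp_polyC; apply: inJMr; [apply: inJ_C|apply: polyO_comp].
Qed.
Lemma ZG Q : polyO v Q -> Z (G * Q).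
Proof.
move=> hQ; split.
  rewrite hornerM; apply: (vgeM0r hv) hGpi _.
  by apply: horner_O => //; apply: (vge_pi 1).
by rewrite comp_polyM; apply: inJMr => //; apply: polyO_comp.
Qed.

Local Notation u0 := (U`_0).
Lemma u0OK : u0 \in OK v. Proof. by move/polyOverP: hU. Qed.
Lemma u0_neq0 : u0 != 0. Proof. exact: hU0'. Qed.
Lemma u0i : u0^-1 \in OK v. Proof. by apply: OK_inv => //; apply: u0OK. Qed.

Local Notation T := (1 - (u0^-1)%:P * U).
Definition Vp := (u0^-1)%:P * \sum_(k < N) T ^+ k.
Lemma T_OK : T \is a polyOver (OK v).
Proof. by apply: rpredB; [apply: rpred1|apply: rpredM => //; rewrite polyOverC; apply: u0i]. Qed.
Lemma V_OK : Vp \is a polyOver (OK v).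
Proof.
apply: rpredM; first by rewrite polyOverC; apply: u0i.
by apply: rpred_sum => k _; apply: rpredX; apply: T_OK.
Qed.
Lemma UV : U * Vp = 1 - T ^+ N.
Proof.
rewrite /Vp mulrA [U * _]mulrC.
transitivity ((1 - T) * \sum_(k < N) T ^+ k); first by congr (_ * _); ring.
by rewrite -opprB mulNr -subrX1 opprB.
Qed.
Lemma T_X : exists T', T' \is a polyOver (OK v) /\ T = T' * 'X.
Proof.
exists (drop_poly 1 T); split.
  by apply/polyOverP => i; rewrite coef_drop_poly; move/polyOverP: T_OK; apply.
have t0 : take_poly 1 T = 0.
  apply/polyP => i; rewrite coef_take_poly coef0; case: i => [|i] //=.
  by rewrite coefB coef1 coefCM mulVf ?u0_neq0 // subrr.
by rewrite -{1}(poly_take_drop 1 T) t0 add0r expr1.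
Qed.

Lemma ZXn : Z ('X^n - pK%:P * Vp).
Proof.
have [T' [hT' eT]] := T_X.
have -> : 'X^n - pK%:P * Vp = G * Vp + 'X^N * ('X^n * T' ^+ N).
  have e : 'X^n = 'X^n * (U * Vp) + 'X^n * T ^+ N by rewrite UV; ring.
  rewrite {1}e eT exprMn; ring.
apply: ZD; first by apply: ZG; apply: KOO; apply: V_OK.
by apply: ZXN; apply: polyOM; [apply: polyOX; apply: polyO_X|apply: polyOX; apply: KOO].
Qed.

Lemma reduce m r : r \is a polyOver (OK v) ->
  exists R r', [/\ R \is a polyOver (OK v), (size R <= n)%N, r' \is a polyOver (OK v) &
    Z (r - (R + (pK ^+ m)%:P * r'))].
Proof.
move=> hr; elim: m => [|m [R [r' [hR hRs hr' hZ]]]].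
  exists 0, r; split => //; first by apply: rpred0.
    by rewrite size_poly0.
  by rewrite expr0 mul1r add0r subrr; split; [rewrite horner0; apply: vge0|rewrite comp_poly0; apply: inJ0].
exists (R + (pK ^+ m)%:P * take_poly n r'), (Vp * drop_poly n r'); split.
- apply: rpredD => //; apply: rpredM; first by rewrite polyOverC; apply: rpredX.
  by apply/polyOverP => i; rewrite coef_take_poly; case: ifP => _; [move/polyOverP: hr'; apply|apply: rpred0].
- apply: leq_trans (size_polyD _ _) _; rewrite geq_max hRs /= mul_polyC.
  by apply: leq_trans (size_scale_leq _ _) _; apply: size_take_poly.
- apply: rpredM; first by apply: V_OK.
  by apply/polyOverP => i; rewrite coef_drop_poly; move/polyOverP: hr'; apply.
- have -> : r - (R + (pK ^+ m)%:P * take_poly n r' + (pK ^+ m.+1)%:P * (Vp * drop_poly n r')) =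
     (r - (R + (pK ^+ m)%:P * r')) + ((pK ^+ m)%:P * drop_poly n r') * ('X^n - pK%:P * Vp).
    move: (take_poly n r') (drop_poly n r') (poly_take_drop n r') => A B er.
    by rewrite -er exprS polyCM; ring.
  apply: ZD => //; apply: ZM; last by apply: ZXn.
  apply: polyOM; first by apply: polyOC; apply/(ObP hv); apply: OK_Ob; apply: rpredX.
  by move=> i; rewrite coef_drop_poly; apply/(ObP hv); apply: OK_Ob; move/polyOverP: hr'; apply.
Qed.

Lemma KL r : r \is a polyOver (OK v) -> vge v N r.[piL] -> inJ (r \Po E).
Proof.
move=> hr hrpi; have [R [r' [hR hRs hr' hZ]]] := reduce N hr.
have hZ2 : Z (r - R).
  have -> : r - R = (r - (R + (pK ^+ N)%:P * r')) + (pK ^+ N)%:P * r' by ring.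
  apply: ZD => //; apply: Zc; last by apply: KOO.
  have := vgeX hv N hpKv; apply: vge_le.
  have h1 : (1 <= n)%N by [].
  rewrite -[X in X <= _]mul1r mulrC; apply: ler_wpM2l; first exact: le0z_nat.
  by rewrite lez_nat.
have hRpi : vge v N R.[piL].
  have -> : R = r - (r - R) by ring.
  by rewrite hornerD hornerN; apply: (vgeB hv) => //; case: hZ2.
have -> : r = (r - R) + R by ring.
rewrite comp_polyD; apply: inJD; first by case: hZ2.
have [k ek] := Kim_fun hR.
have hsum : R.[piL] = \sum_(i < n) (k i)%:A * piL ^+ i.
  by rewrite (horner_coef_wide _ hRs); apply: eq_bigr => i _; rewrite ek.
have hterm := dv_sum hv (term_distinct (k:=k)) (m := N).
rewrite -hsum in hterm; have {}hterm := hterm hRpi.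
rewrite comp_polyE; apply: inJ_sum => i _.
have [w [hw ->]] := hEk i.
rewrite -mul_polyC mulrA -polyCM; apply: inJMr => //; apply: inJ_C.
rewrite ek; apply: hterm; apply: leq_trans (ltn_ord i) hRs.
Qed.
End KL.

Lemma comp_polysum M (a : nat -> L) y :
  (\poly_(i < M) a i) \Po y = \sum_(i < M) (a i)%:P * y ^+ i.
Proof.
rewrite poly_def; elim: M => [|M IH]; first by rewrite !big_ord0 comp_poly0.
by rewrite !big_ord_recr /= comp_polyD IH comp_polyZ comp_Xn mul_polyC.
Qed.

Section Thm.
Variables (c d : nat) (u : {poly L}) (piK : K) (f : nat -> K).
Hypothesis hN : N = (n + d)%N.
Hypothesis hP : (1 < P)%N.
Hypothesis hn1 : (1 < n)%N.
Hypothesis hcd : (c <= d)%N.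
Hypothesis huO : polyO v u.
Hypothesis hu : exists w : {poly L}, polyO v w /\ exists z : {poly L}, u * w - 1 = 'X^P * z.
Hypothesis hpiK0 : piK != 0.
Hypothesis hpiK : v piK%:A = n%:Z.
Hypothesis hfO : forall i, vge v 0 (f i)%:A.
Hypothesis hfn : forall i, (i < n)%N -> f i = 0.
Hypothesis hF : forall m : int, exists M0, forall M, (M0 <= M)%N ->
          vge v m (piK%:A - \sum_(i < M) (f i)%:A * piL ^+ i).

Local Notation pK := (piK%:A : L).
Definition qM M : {poly L} := \poly_(i < M) (f i)%:A.

Lemma qM_OK M : qM M \is a polyOver (OK v).
Proof.
apply/polyOverP => i; rewrite coef_poly; case: ifP => _; last by apply: rpred0.
by apply/(OKP hv); split => //; exists (f i).
Qed.

Lemma qM_comp M y : qM M \Po y = \sum_(i < M) ((f i)%:A)%:P * y ^+ i.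
Proof. exact: comp_polysum. Qed.

Lemma qM_pi M : (qM M).[piL] = \sum_(i < M) (f i)%:A * piL ^+ i.
Proof. exact: horner_poly. Qed.

Lemma pK_OK : pK \in OK v.
Proof. by apply/(OKP hv); split; [right; rewrite hpiK|exists piK]. Qed.
Lemma pK_v : vge v n%:Z pK.
Proof. by right; rewrite hpiK. Qed.

Lemma hFN : exists M1, forall M, (M1 <= M)%N -> vge v N (pK - (qM M).[piL]).
Proof. by have [M1 h] := hF N; exists M1 => M hM; rewrite qM_pi; apply: h. Qed.

Lemma fn_unit : (f n)%:A != 0 :> L /\ v (f n)%:A = 0.
Proof.
have [M1 h] := hF (n%:Z + 1).
set M := maxn M1 n.+1.
have hM : (M1 <= M)%N by apply: leq_maxl.
have hnM : (n < M)%N by apply: leq_maxr.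
have hpkpi : v pK = n%:Z := hpiK.
suff : ~ vge v 1 ((f n)%:A).
  move=> nv; have := hfO n; case=> [e0|h0]; first by exfalso; apply: nv; left.
  have f0 : (f n)%:A != 0 :> L by apply/negP => /eqP e0; apply: nv; left.
  split => //; case: (ltP 0 (v (f n)%:A)) => [lt|le]; last by apply/eqP; rewrite eq_le le h0.
  by exfalso; apply: nv; right.
move=> hfn1; have hsum : vge v (n%:Z + 1) (\sum_(i < M) (f i)%:A * piL ^+ i).
  apply: (vge_sum hv) => i _.
  case: (ltngtP i n) => [lt|gt|->].
  - by rewrite hfn // scale0r mul0r; apply: vge0.
  - apply: (vgeM0l hv) (hfO i) _; apply: vge_le (vge_piX i).
    lia.
  - by have := vgeM hv hfn1 (vge_piX n); apply: vge_le; rewrite addrC.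
have := (vgeD hv) (h M hM) hsum; rewrite subrK; case=> [/eqP|].
  by rewrite alg_eq0 (negbTE hpiK0).
by rewrite hpiK; lia.
Qed.


Definition e := piL%:P + u * (piL ^+ c.+1)%:P * 'X.

Lemma vge_pi1 : vge v 0 piL. Proof. by have := vge_pi 1; rewrite expr1. Qed.

Lemma e_O : polyO v e.
Proof.
apply: polyOD; first by apply: polyOC; apply: vge_pi1.
by apply: polyOM; [apply: polyOM => //; apply: polyOC; apply: vge_pi|apply: polyO_X].
Qed.

Lemma e_pow k : exists w, polyO v w /\ e ^+ k = (piL ^+ k)%:P * w.
Proof.
have ee : e = piL%:P * (1 + u * (piL ^+ c)%:P * 'X) by rewrite /e exprS polyCM; ring.
exists ((1 + u * (piL ^+ c)%:P * 'X) ^+ k); split.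
  apply: polyOX; apply: polyOD; first exact: polyO1.
  by apply: polyOM; [apply: polyOM => //; apply: polyOC; apply: vge_pi|apply: polyO_X].
by rewrite ee exprMn -polyC_exp.
Qed.

Lemma exR b : exists R, R \is a polyOver (OK v) /\ (vge v 0 b -> b = R.[piL]).
Proof.
case: (Classical_Prop.classic (vge v 0 b)) => hb.
  by have [R [h1 _ h3]] := expand hb; exists R.
by exists 0; split => //; apply: rpred0.
Qed.

Definition Rb b := proj1_sig (ClassicalEpsilon.constructive_indefinite_description _ (exR b)).
Lemma Rb_OK b : Rb b \is a polyOver (OK v).
Proof. by rewrite /Rb; case: ClassicalEpsilon.constructive_indefinite_description => R []. Qed.
Lemma Rb_eval b : vge v 0 b -> b = (Rb b).[piL].
Proof. by rewrite /Rb; case: ClassicalEpsilon.constructive_indefinite_description => R []. Qed.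

Lemma imp12 : (exists M0, forall M, (M0 <= M)%N ->
          congJ (\sum_(i < M) ((f i)%:A)%:P * e ^+ i) (pK%:P)) ->
  exists s : L -> {poly L}, Ad_alg_hom v piL N P s /\ congJ (s piL) e.
Proof.
case=> M0 h1; have [M1 hM1] := hFN.
set M := maxn (maxn M0 M1) n.+1.
have hM0 : (M0 <= M)%N by rewrite /M !leq_max leqnn.
have hM1' : (M1 <= M)%N by rewrite /M !leq_max leqnn orbT.
have hnM : (n < M)%N by rewrite /M !leq_max leqnn orbT.
set U := drop_poly n (qM M).
have qU : qM M = U * 'X^n.
  rewrite -{1}(poly_take_drop n (qM M)); rewrite -[RHS]add0r; congr (_ + _).
  apply/polyP => i; rewrite coef_take_poly coef_poly coef0; case: ifP => // hi.
  by rewrite hfn // scale0r; case: ifP.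
have hU0 : U`_0 = (f n)%:A by rewrite coef_drop_poly add0n coef_poly hnM.
have [fn0 fnv] := fn_unit.
have hU : U \is a polyOver (OK v).
  by apply/polyOverP => i; rewrite coef_drop_poly; move/polyOverP: (qM_OK M); apply.
have hGpi : vge v N (U * 'X^n - pK%:P).[piL].
  rewrite -qU hornerD hornerN hornerC -opprB; apply: (vgeN hv); exact: hM1.
have hGE : inJ ((U * 'X^n - pK%:P) \Po e).
  by rewrite -qU comp_polyB comp_polyC qM_comp; apply: h1.
have KLe := @KL e U pK e_O e_pow pK_OK pK_v hU (etrans (congr1 v hU0) fnv)
   (eq_ind_r (fun x => x != 0) fn0 hU0) hGpi hGE.
exists (fun b => Rb b \Po e); split; last first.
  rewrite /Defs.congJ -[X in _ - X]comp_polyX -comp_polyB; apply: KLe.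
    by apply: rpredB; [apply: Rb_OK|apply: polyOverX].
  by rewrite hornerD hornerN hornerX -Rb_eval ?subrr; [apply: vge0|apply: vge_pi1].
split.
- by move=> x hx; apply: polyO_comp; [apply: KOO; apply: Rb_OK|apply: e_O].
- move=> x y hx hy hxy; rewrite /Defs.congJ -comp_polyB; apply: KLe.
    by apply: rpredB; apply: Rb_OK.
  by rewrite hornerD hornerN -!Rb_eval.
- move=> x y hx hy; rewrite /Defs.congJ -comp_polyD -comp_polyB; apply: KLe.
    by apply: rpredB; [apply: Rb_OK|apply: rpredD; apply: Rb_OK].
  rewrite hornerD hornerN hornerD -!Rb_eval ?subrr //; first by apply: vge0.
  by apply: (vgeD hv).
- move=> x y hx hy; rewrite /Defs.congJ -comp_polyM -comp_polyB; apply: KLe.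
    by apply: rpredB; [apply: Rb_OK|apply: rpredM; apply: Rb_OK].
  rewrite hornerD hornerN hornerM -!Rb_eval ?subrr //; first by apply: vge0.
  by apply: (vgeM0l hv).
- move=> a ha; rewrite /Defs.congJ -(comp_polyC _ e) -comp_polyB; apply: KLe.
    apply: rpredB; [apply: Rb_OK|rewrite polyOverC; apply/(OKP hv)].
    by split => //; exists a.
  by rewrite hornerD hornerN hornerC -!Rb_eval ?subrr //; apply: vge0.
Qed.


Lemma u0_unit : u`_0 != 0 /\ v u`_0 = 0.
Proof.
case: hu => w [hw [z ez]].
have e0 : u`_0 * w`_0 = 1.
  have := congr1 (fun p : {poly L} => p`_0) ez; rewrite /= coefB coef0M coef1 coefXnM.
  have -> : (0 < P)%N by apply: ltn_trans hP.
  by move/eqP; rewrite subr_eq0 => /eqP.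
have u0 : u`_0 != 0 by apply/negP => /eqP h; move: e0; rewrite h mul0r => /eqP; rewrite eq_sym oner_eq0.
have w0 : w`_0 != 0 by apply/negP => /eqP h; move: e0; rewrite h mulr0 => /eqP; rewrite eq_sym oner_eq0.
split => //; have := congr1 v e0; rewrite (vM hv) // (v1 hv) => h.
have h1 := vge_neq0 u0 (huO 0); have h2 := vge_neq0 w0 (hw 0); lia.
Qed.

Lemma unit_plus (a x : L) : a != 0 -> v a = 0 -> vge v 1 x -> x + a != 0 /\ v (x + a) = 0.
Proof.
move=> a0 va h; case: (eqVneq x 0) => [->|x0]; first by rewrite add0r.
have lt : v a < v x by rewrite va; have := vge_neq0 x0 h; lia.
by have [h1 h2] := v_strict hv a0 x0 lt; rewrite addrC h2.
Qed.

Lemma imp23 : (exists s : L -> {poly L}, Ad_alg_hom v piL N P s /\ congJ (s piL) e) ->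
  (exists s : L -> {poly L}, Ad_alg_hom v piL N P s /\
          (forall b, vge v 0 b -> exists x z w, polyO v x /\ polyO v z /\ polyO v w /\
             s b - b%:P = (piL ^+ c.+1)%:P * 'X * x + (piL ^+ N)%:P * z + 'X^P * w) /\
          ~ (forall b, vge v 0 b -> exists x y z w,
             polyO v x /\ polyO v y /\ polyO v z /\ polyO v w /\
             s b - b%:P = (piL ^+ c.+1)%:P * 'X * (piL%:P * x + 'X * y)
                          + (piL ^+ N)%:P * z + 'X^P * w)).
Proof.
case=> s [hA hse]; exists s; split => //.
have [hO hcong hadd hmul hK] := hA.
have hspO : polyO v (s piL) by apply: hO; apply: vge_pi1.
split.
  move=> b hb; set R := Rb b.
  have hR := Rb_OK b; have hRO := KOO hR.
  have h1 : congJ (s b) (R \Po e).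
    apply: congJ_trans (congJ_comp hRO hspO e_O hse).
    by rewrite {1}(Rb_eval hb); apply: Ad_poly.
  have [Q [hQ eQ]] := factor hRO e_O (polyOC vge_pi1).
  rewrite comp_polyCr -(Rb_eval hb) in eQ.
  have [z [w [hz [hw ej]]]] : inJ (s b - (R \Po e)) by [].
  exists (u * Q), z, w; split; first exact: polyOM.
  split => //; split => //.
  have -> : s b - b%:P = (s b - (R \Po e)) + ((R \Po e) - b%:P) by ring.
  by rewrite ej eQ /e; ring.
move=> H; have [x [y [z [w [hx [hy [hz [hw ex]]]]]]]] := H piL vge_pi1.
have hJ : inJ ((piL ^+ c.+1)%:P * ('X * (piL%:P * x + 'X * y - u))).
  have -> : (piL ^+ c.+1)%:P * ('X * (piL%:P * x + 'X * y - u)) =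
      (s piL - e) - ((piL ^+ N)%:P * z + 'X^P * w).
    by apply/eqP; rewrite -subr_eq0; apply/eqP; move: ex; rewrite /e => ex; rewrite -[s piL](subrK piL%:P) ex; ring.
  by apply: inJB => //; apply: inJD; [apply: inJ_piN|apply: inJ_XP].
have := (inJ_coef hJ).2 1 hP.
rewrite coefCM coefXM /= coefB coefD coefCM coefXM /= addr0.
have [u0 vu0] := u0_unit.
have hpx : vge v 1 (piL * x`_0).
  by have := vgeM hv (vge_piX 1) (hx 0); rewrite expr1 addr0.
have nu0 : - u`_0 != 0 by rewrite oppr_eq0.
have vnu0 : v (- u`_0) = 0 by rewrite (vN hv).
have [h1 h2] := unit_plus nu0 vnu0 hpx.
case=> [/eqP|h]; first by rewrite mulf_eq0 expf_eq0 (negbTE hpiL0) andbF (negbTE h1).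
move: h; rewrite (vM hv) ?expf_neq0 // v_piX h2 addr0 hN; lia.
Qed.


Lemma taylor_coef H x : polyO v H -> polyO v x -> x`_0 != 0 -> v x`_0 = 0 ->
  inJ (H \Po ('X * x)) -> inJ H.
Proof.
move=> hH hx x0 vx0 hJ.
have hXx : polyO v ('X * x) by apply: polyOM => //; apply: polyO_X.
suff key : forall k, (k <= P)%N -> forall l, (l < k)%N -> vge v N H`_l.
  by apply: coef_inJ => // i hi; apply: (key P (leqnn P)).
elim=> [|k IH] hk l hl; first by [].
have IH' := IH (ltnW hk).
rewrite ltnS leq_eqVlt in hl; case/orP: hl => [/eqP->|hl]; last by apply: IH'.
have ht : inJ (take_poly k H).
  apply: coef_inJ => [i|i hi]; rewrite coef_take_poly; case: ifP => hik; try by apply: vge0.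
    by apply: hH.
  by apply: IH'.
have hD : inJ ((drop_poly k H * 'X^k) \Po ('X * x)).
  have := inJB hJ (inJ_compXy ht hx).
  by rewrite -{1}(poly_take_drop k H) comp_polyD addrC addKr.
rewrite comp_polyM comp_Xn exprMn mulrCA in hD.
have := (inJ_coef hD).2 k hk.
rewrite coefXnM ltnn subnn -horner_coef0 hornerM horner_exp horner_comp hornerM hornerX mul0r.
rewrite horner_coef0 horner_coef0 coef_drop_poly add0n.
case: (eqVneq H`_k 0) => [->|hk0]; first by move=> _; apply: vge0.
case=> [/eqP|h]; first by rewrite mulf_eq0 expf_eq0 (negbTE x0) andbF (negbTE hk0).
right; move: h; rewrite (vM hv) ?expf_neq0 // (vX hv) // vx0 mulr0 addr0 //.
Qed.


Lemma imp31 : (exists s : L -> {poly L}, Ad_alg_hom v piL N P s /\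
          (forall b, vge v 0 b -> exists x z w, polyO v x /\ polyO v z /\ polyO v w /\
             s b - b%:P = (piL ^+ c.+1)%:P * 'X * x + (piL ^+ N)%:P * z + 'X^P * w) /\
          ~ (forall b, vge v 0 b -> exists x y z w,
             polyO v x /\ polyO v y /\ polyO v z /\ polyO v w /\
             s b - b%:P = (piL ^+ c.+1)%:P * 'X * (piL%:P * x + 'X * y)
                          + (piL ^+ N)%:P * z + 'X^P * w)) ->
  (exists M0, forall M, (M0 <= M)%N ->
          congJ (\sum_(i < M) ((f i)%:A)%:P * e ^+ i) (pK%:P)).
Proof.
case=> s [hA [hdec hneg]].
have [hO hcong hadd hmul hK] := hA.
have [x [z [w [hx [hz [hw ex]]]]]] := hdec piL vge_pi1.
set C := (piL ^+ c.+1)%:P.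
have hC : polyO v C by apply: polyOC; apply: vge_pi.
set ex' := piL%:P + C * 'X * x.
have hex' : polyO v ex'.
  apply: polyOD; first by apply: polyOC; apply: vge_pi1.
  by apply: polyOM => //; apply: polyOM => //; apply: polyO_X.
have hspO : polyO v (s piL) by apply: hO; apply: vge_pi1.
have hsx : congJ (s piL) ex'.
  rewrite /Defs.congJ /ex'.
  have -> : s piL - (piL%:P + C * 'X * x) = (piL ^+ N)%:P * z + 'X^P * w.
    by rewrite -[s piL](subrK piL%:P) ex; ring.
  by apply: inJD; [apply: inJ_piN|apply: inJ_XP].
have hx0 : ~ vge v 1 x`_0.
  move=> h1; apply: hneg => b hb; set R := Rb b.
  have hR := Rb_OK b; have hRO := KOO hR.
  have h1' : congJ (s b) (R \Po ex').
    apply: congJ_trans (congJ_comp hRO hspO hex' hsx).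
    by rewrite {1}(Rb_eval hb); apply: Ad_poly.
  have [Q [hQ eQ]] := factor hRO hex' (polyOC vge_pi1).
  rewrite comp_polyCr -(Rb_eval hb) in eQ.
  have [z' [w' [hz' [hw' ej]]]] : inJ (s b - (R \Po ex')) by [].
  have ex1 : x = (x`_0 / piL)%:P * piL%:P + drop_poly 1 x * 'X.
    rewrite -{1}(poly_take_drop 1 x) expr1; congr (_ + _).
    apply/polyP => i; rewrite coef_take_poly coefCM coefC; case: i => [|i] //=.
      by rewrite divfK.
    by rewrite ?coefC ?mulr0 ?mul0r.
  exists ((x`_0 / piL)%:P * Q), (drop_poly 1 x * Q), z', w'; split.
    apply: polyOM => //; apply: polyOC.
    have h2 := vge_div (m:=0) (k:=1) (x:=x`_0); rewrite expr1 add0r in h2.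
    exact: h2.
  split; first by apply: polyOM => // i; rewrite coef_drop_poly; apply: hx.
  split => //; split => //.
  have -> : s b - b%:P = (s b - (R \Po ex')) + ((R \Po ex') - b%:P) by ring.
  rewrite ej eQ /ex' {1}ex1; ring.
have hx0O := hx 0.
have x0 : x`_0 != 0 by apply/negP => /eqP h; apply: hx0; rewrite h; left.
have vx0 : v x`_0 = 0.
  case: hx0O => [/eqP|h]; first by rewrite (negbTE x0).
  apply/eqP; rewrite eq_le h andbT; case: (ltP 0 (v x`_0)) => // lt.
  by exfalso; apply: hx0; right.
have [M1 hM1] := hFN.
exists M1 => M hM; rewrite -qM_comp /Defs.congJ.
have hpKO : vge v 0 pK by case/(OKP hv): pK_OK.
have hqO : vge v 0 (qM M).[piL] by apply: horner_O; [apply: KOO; apply: qM_OK|apply: vge_pi1].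
have c1 : congJ (s (qM M).[piL]) (pK%:P).
  apply: congJ_trans (hK piK hpKO); apply: hcong => //.
  by rewrite -opprB; apply: (vgeN hv); apply: hM1.
have c2 : congJ ((qM M) \Po ex') (pK%:P).
  apply: congJ_trans c1; apply: congJ_sym.
  apply: congJ_trans (Ad_poly hA (qM_OK M)) _.
  by apply: congJ_comp => //; apply: KOO; apply: qM_OK.
set H := (qM M \Po (piL%:P + C * 'X)) - pK%:P.
have hH : polyO v H.
  apply: polyOB; last by apply: polyOC.
  apply: polyO_comp; first by apply: KOO; apply: qM_OK.
  by apply: polyOD; [apply: polyOC; apply: vge_pi1|apply: polyOM => //; apply: polyO_X].
have eH : forall y, H \Po ('X * y) = (qM M) \Po (piL%:P + C * ('X * y)) - pK%:P.
  move=> y; rewrite /H comp_polyB comp_polyC -comp_polyA.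
  by rewrite comp_polyD comp_polyC comp_polyM comp_polyC comp_polyX.
have hJx : inJ (H \Po ('X * x)) by rewrite eH mulrA; exact: c2.
have hJH := taylor_coef hH hx x0 vx0 hJx.
have := inJ_compXy hJH huO; rewrite eH.
suff -> : piL%:P + C * ('X * u) = e by [].
by rewrite /e /C; ring.
Qed.

End Thm.
End Main.

End Aux.
Import Aux.

Theorem proposition2p3
  (p : nat) (K : fieldType) (L : fieldExtType K) (v : L -> int)
  (piK : K) (piL : L)
  (hp : prime p)
  (hv : is_valuation v)
  (hKc : K_complete v)
  (hchar : residue_char v p)
  (hperf : residue_perfect v p)
  (hsep : separable 1%VS {:L}%VS)
  (hn : (1 < \dim {:L})%N)
  (htot : totally_ramified v)
  (hpiK0 : piK != 0) (hpiK : v piK%:A = (\dim {:L})%:Z)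
  (hpiL0 : piL != 0) (hpiL : v piL = 1)
  (j c d : nat) (hj : (j <= logn p (\dim {:L}))%N) (hcd : (c <= d)%N)
  (u : {poly L})
  (huO : polyO v u)
  (hu : exists w : {poly L}, polyO v w /\
          exists z : {poly L}, u * w - 1 = 'X^(p ^ j.+1) * z)
  (f : nat -> K)
  (hfO : forall i, vge v 0 (f i)%:A)
  (hfn : forall i, (i < \dim {:L})%N -> f i = 0)
  (hF : forall m : int, exists M0, forall M, (M0 <= M)%N ->
          vge v m (piK%:A - \sum_(i < M) (f i)%:A * piL ^+ i)) :
  let n := \dim {:L} in
  let P := (p ^ j.+1)%N in
  let N := (n + d)%N in
  let e := piL%:P + u * (piL ^+ c.+1)%:P * 'X in
  [<-> (exists M0, forall M, (M0 <= M)%N ->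
          congJ v piL N P (\sum_(i < M) ((f i)%:A)%:P * e ^+ i) (piK%:A)%:P);
       (exists s : L -> {poly L}, Ad_alg_hom v piL N P s /\
          congJ v piL N P (s piL) e);
       (exists s : L -> {poly L}, Ad_alg_hom v piL N P s /\
          (forall b, vge v 0 b -> exists x z w, polyO v x /\ polyO v z /\ polyO v w /\
             s b - b%:P = (piL ^+ c.+1)%:P * 'X * x + (piL ^+ N)%:P * z + 'X^P * w) /\
          ~ (forall b, vge v 0 b -> exists x y z w,
             polyO v x /\ polyO v y /\ polyO v z /\ polyO v w /\
             s b - b%:P = (piL ^+ c.+1)%:P * 'X * (piL%:P * x + 'X * y)
                          + (piL ^+ N)%:P * z + 'X^P * w))].

Proof.
move=> n P N e.
have hn0 : (0 < n)%N by apply: ltnW.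
have hN : N = (n + d)%N by [].
have hP : (1 < P)%N.
  rewrite /P expnS; have h1 := prime_gt1 hp; have h2 : (0 < p ^ j)%N by rewrite expn_gt0 ltnW.
  by apply: leq_trans h1 _; apply: leq_pmulr.
tfae.
- by apply: (imp12 hv hpiL0 hpiL htot hn0 hN hP hn hcd huO hpiK0 hpiK hfO hfn hF).
- by apply: (imp23 hv hpiL0 hpiL htot hn0 hN hP hn hcd huO hu hpiK0 hpiK).
- by apply: imp31.
Qed.
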